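(* Let $p$ be a prime, $d\ge1$, $g\in L^2(\mathbb{Z}_p^d)$ with $\|g\|_2=1$, and $A,B\subseteq\mathbb{Z}_p^d$. Let $E=\operatorname{supp}(g)=\{x: g(x)\neq 0\}$ and assume $|E|=|B|$. Then the Gabor system $\mathcal{G}(g,A,B)$ is an orthonormal basis of $L^2(\mathbb{Z}_p^d)$ if and only if all of the following hold: (i) $|g|=|E|^{-1/2}1_E$; (ii) $(E,B)$ is a spectral pair; (iii) $(E,A)$ is a tiling pair.
   Context: $\mathbb{Z}_p$ is the field of integers mod a prime $p$, $\mathbb{Z}_p^d$ the $d$-dimensional vector space over it, and $x\cdot b=\sum_i x_ib_i$. $\chi(t)=e^{2\pi i t/p}$ for $t\in\mathbb{Z}_p$. $L^2(\mathbb{Z}_p^d)$ is the space of functions $\mathbb{Z}_p^d\to\mathbb{C}$ with inner product $\langle f,h\rangle=\sum_{x\in\mathbb{Z}_p^d} f(x)\overline{h(x)}$ (counting measure). For $g\in L^2(\mathbb{Z}_p^d)$ and $A,B\subseteq\mathbb{Z}_p^d$, the Gabor system is $\mathcal{G}(g,A,B)=\{x\mapsto g(x-a)\chi(x\cdot b)\}_{a\in A,\ b\in B}$ (indexed by pairs $(a,b)$). $1_E$ denotes the indicator function of $E$. A pair $(E,B)$ is a spectral pair if the functions $\{x\mapsto\chi(x\cdot b)\}_{b\in B}$, restricted to $E$, form an orthogonal basis of $L^2(E)$. A pair $(E,A)$ is a tiling pair if $\sum_{a\in A}1_E(x-a)=1$ for all $x\in\mathbb{Z}_p^d$. *)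

(* Defs.v *)
From HB Require Import structures.
From mathcomp Require Import all_boot all_order all_algebra algC.
Set Implicit Arguments. Unset Strict Implicit. Unset Printing Implicit Defensive.
Import Order.TTheory GRing.Theory Num.Theory.
Local Open Scope ring_scope.

Definition Vp (p d : nat) := 'rV['F_p]_d.

Definition dotp (p d : nat) (x b : Vp p d) : 'F_p := \sum_(i < d) x 0 i * b 0 i.

(* omega = e^{2 pi i / p}: p.-root (-1) is e^{i pi / p} (minimal argument) *)
Definition omega (p : nat) : algC := (p.-root (-1)) ^+ 2.

(* chi(t) = e^{2 pi i t / p}, t read as its representative in {0,..,p-1} *)
Definition chi (p : nat) (t : 'F_p) : algC := omega p ^+ (nat_of_ord t).

(* inner product on L^2(Z_p^d), counting measure *)
Definition inner (p d : nat) (f h : Vp p d -> algC) : algC :=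
  \sum_(x : Vp p d) f x * (h x)^*.

Definition l2norm (p d : nat) (f : Vp p d -> algC) : algC := sqrtC (inner f f).

Definition supp (p d : nat) (g : Vp p d -> algC) : {set Vp p d} :=
  [set x | g x != 0].

Definition gabor (p d : nat) (g : Vp p d -> algC) (a b : Vp p d) : Vp p d -> algC :=
  fun x => g (x - a) * chi (dotp x b).

Definition gabor_ONB (p d : nat) (g : Vp p d -> algC) (A B : {set Vp p d}) : Prop :=
  (forall a b a' b', a \in A -> b \in B -> a' \in A -> b' \in B ->
     inner (gabor g a b) (gabor g a' b') = ((a, b) == (a', b'))%:R)
  /\ (forall f : Vp p d -> algC, exists c : Vp p d -> Vp p d -> algC,
        forall x, f x = \sum_(a in A) \sum_(b in B) c a b * gabor g a b x).

Definition spectral_pair (p d : nat) (E B : {set Vp p d}) : Prop :=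
  (forall b, b \in B -> \sum_(x in E) chi (dotp x b) * (chi (dotp x b))^* != 0)
  /\ (forall b b', b \in B -> b' \in B -> b != b' ->
        \sum_(x in E) chi (dotp x b) * (chi (dotp x b'))^* = 0)
  /\ (forall f : Vp p d -> algC, exists c : Vp p d -> algC,
        forall x, x \in E -> f x = \sum_(b in B) c b * chi (dotp x b)).

Definition tiling_pair (p d : nat) (E A : {set Vp p d}) : Prop :=
  forall x : Vp p d, (\sum_(a in A) nat_of_bool ((x - a)%R \in E))%N = 1%N.

(* Main.v *)
Require Import Defs.
From HB Require Import structures.
From mathcomp Require Import all_boot all_order all_algebra algC.
From mathcomp Require Import ring.
From Stdlib Require Import IndefiniteDescription.
Import Order.TTheory GRing.Theory Num.Theory.
Local Open Scope ring_scope.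

Section Main.
Variables (p d : nat) (hp : prime p) (g : Vp p d -> algC).

Lemma omega_p : omega p ^+ p = 1.
Proof.
rewrite /omega -exprM mulnC exprM rootCK ?prime_gt0 //.
by rewrite expr2 mulrNN mulr1.
Qed.

Lemma val_Fp_add (s t : 'F_p) : nat_of_ord (s + t) = ((s + t) %% p)%N.
Proof. have -> : nat_of_ord (s + t) = ((s + t) %% (Zp_trunc (pdiv p)).+2)%N by [].
by congr (_ %% _)%N; exact: Fp_cast. Qed.

Lemma chiD (s t : 'F_p) : chi (s + t) = chi s * chi t.
Proof. by rewrite /chi val_Fp_add expr_mod ?omega_p // exprD. Qed.

Lemma norm_omega : `|omega p| = 1.
Proof.
apply/eqP; rewrite -(pexpr_eq1 (prime_gt0 hp)) ?normr_ge0 //.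
by rewrite -normrX omega_p normr1.
Qed.

Lemma norm_chi (t : 'F_p) : `|chi t| = 1.
Proof. by rewrite /chi normrX norm_omega expr1n. Qed.

Lemma chi_conj (t : 'F_p) : chi t * (chi t)^* = 1.
Proof. by rewrite -normCK norm_chi expr1n. Qed.

Lemma chi_neq0 (t : 'F_p) : chi t != 0.
Proof. by rewrite -normr_eq0 norm_chi oner_eq0. Qed.

Lemma dotpD (x y b : Vp p d) : dotp (x + y) b = dotp x b + dotp y b.
Proof. by rewrite /dotp -big_split; apply: eq_bigr => i _; rewrite mxE mulrDl. Qed.

Lemma dotpB (x y b : Vp p d) : dotp (x - y) b = dotp x b - dotp y b.
Proof.
rewrite /dotp -sumrB; apply: eq_bigr => i _; rewrite !mxE mulrBl //.
Qed.

Lemma chiB (s t : 'F_p) : chi (s - t) = chi s * chi (- t).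
Proof. by rewrite chiD. Qed.

Notation E := (supp g).

Lemma notsupp x : x \notin E -> g x = 0.
Proof. by rewrite inE negbK => /eqP. Qed.

Lemma sum_supp (F : Vp p d -> algC) :
  \sum_y g y * F y = \sum_(y in E) g y * F y.
Proof.
rewrite [RHS]big_mkcond; apply: eq_bigr => y _.
by case: ifP => // /negbT /notsupp ->; rewrite mul0r.
Qed.

Definition S (b b' : Vp p d) :=
  \sum_y g y * (g y)^* * (chi (dotp y b) * (chi (dotp y b'))^*).

Lemma gabor_same a b b' : inner (gabor g a b) (gabor g a b') =
  chi (dotp a b) * (chi (dotp a b'))^* * S b b'.
Proof.
rewrite /inner /S (reindex_inj (addIr a)) mulr_sumr; apply: eq_bigr => y _.
rewrite /gabor addrK !dotpD !chiD !rmorphM /=; ring.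
Qed.

Lemma Sbb b : S b b = inner g g.
Proof. by apply: eq_bigr => y _; rewrite chi_conj mulr1. Qed.


Lemma sqinv (n m : nat) (h : n = m) (X : 'M[algC]_(n, m)) (Y : 'M[algC]_(m, n)) :
  X *m Y = 1%:M -> Y *m X = 1%:M.
Proof. by case: m / h X Y => X Y; apply: mulmx1C. Qed.

Lemma complete (B : {set Vp p d}) (hEB : #|E| = #|B|)
  (hS : forall b b', b \in B -> b' \in B -> S b b' = (b == b')%:R)
  (i l : 'I_#|E|) :
  \sum_(j < #|B|) (g (enum_val i) * chi (dotp (enum_val i) (enum_val j)))^*
       * (g (enum_val l) * chi (dotp (enum_val l) (enum_val j))) = (i == l)%:R.
Proof.
pose N := \matrix_(i < #|E|, j < #|B|) (g (enum_val i) * chi (dotp (enum_val i) (enum_val j))).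
have H1 : N^T *m map_mx (fun z => z^*) N = 1%:M.
  apply/matrixP => j k; rewrite !mxE.
  have -> : \sum_j0 N^T j j0 * (map_mx (fun z => z^*) N) j0 k =
     \sum_(y in E) g y * ((g y)^* * (chi (dotp y (enum_val j)) * (chi (dotp y (enum_val k)))^*)).
    by rewrite [RHS]big_enum_val; apply: eq_bigr => i0 _; rewrite !mxE rmorphM /=; ring.
  rewrite -sum_supp.
  have -> : \sum_y g y * ((g y)^* * (chi (dotp y (enum_val j)) * (chi (dotp y (enum_val k)))^*))
    = S (enum_val j) (enum_val k) by apply: eq_bigr => y _; ring.
  by rewrite hS ?enum_valP // (inj_eq enum_val_inj).
have := @sqinv _ _ (esym hEB) _ _ H1 => /matrixP /(_ i l).
by rewrite !mxE => <-; apply: eq_bigr => j _; rewrite !mxE.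
Qed.


Lemma gg_val (B : {set Vp p d}) (hEB : #|E| = #|B|)
  (hS : forall b b', b \in B -> b' \in B -> S b b' = (b == b')%:R) x :
  x \in E -> g x * (g x)^* = (#|B|%:R)^-1.
Proof.
move=> xE; have := complete _ hEB hS (enum_rank_in xE x) (enum_rank_in xE x).
rewrite eqxx enum_rankK_in //.
under eq_bigr => j _ do rewrite rmorphM /= mulrACA [_^* * chi _]mulrC chi_conj mulr1 mulrC.
rewrite sumr_const card_ord => H0.
have H : #|B|%:R * (g x * (g x)^*) = 1 by rewrite mulr_natl H0.
have nz : (#|B|%:R : algC) != 0 by apply/eqP => H1; move: H; rewrite H1 mul0r => /eqP; rewrite eq_sym oner_eq0.
by apply: (mulfI nz); rewrite H divff.
Qed.

Lemma spec_span (B : {set Vp p d}) (hEB : #|E| = #|B|)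
  (hS : forall b b', b \in B -> b' \in B -> S b b' = (b == b')%:R) (f : Vp p d -> algC) :
  exists c : Vp p d -> algC, forall x, x \in E -> f x = \sum_(b in B) c b * chi (dotp x b).
Proof.
pose h y := g y * f y.
pose N (i : 'I_#|E|) b := g (enum_val i) * chi (dotp (enum_val i) b).
exists (fun b => \sum_(i < #|E|) (N i b)^* * h (enum_val i)).
suff H : forall l : 'I_#|E|, f (enum_val l) = \sum_(b in B) (\sum_(i < #|E|) (N i b)^* * h (enum_val i)) * chi (dotp (enum_val l) b).
  by move=> x xE; rewrite -(enum_rankK_in xE xE) H.
move=> l.
have gnz : g (enum_val l) != 0 by have := enum_valP l; rewrite inE.
apply: (mulfI gnz); rewrite big_enum_val mulr_sumr.
transitivity (\sum_(j < #|B|) \sum_(i < #|E|) (N i (enum_val j))^* * N l (enum_val j) * h (enum_val i)); last first.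
  apply: eq_bigr => j _; rewrite mulr_suml mulr_sumr; apply: eq_bigr => i _; rewrite /N; ring.
rewrite exchange_big /=.
transitivity (\sum_(i < #|E|) (i == l)%:R * h (enum_val i)); last first.
  by apply: eq_bigr => i _; rewrite -big_distrl /= (complete _ hEB hS).
by rewrite (bigD1 l) //= eqxx mul1r big1 ?addr0 // => i /negbTE ->; rewrite mul0r.
Qed.


Lemma ifmul (c : bool) (k F : algC) : (if c then k else 0) * F = if c then k * F else 0.
Proof. by case: c; rewrite ?mul0r. Qed.

Definition ONB_orth (A B : {set Vp p d}) := forall a b a' b', a \in A -> b \in B -> a' \in A -> b' \in B ->
     inner (gabor g a b) (gabor g a' b') = ((a, b) == (a', b'))%:R.
Definition ONB_span (A B : {set Vp p d}) := forall f : Vp p d -> algC, exists c : Vp p d -> Vp p d -> algC,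
        forall x, f x = \sum_(a in A) \sum_(b in B) c a b * gabor g a b x.

Lemma Aneq0 A B : ONB_span A B -> exists a0, a0 \in A.
Proof.
move=> hsp; case: (set_0Vmem A) => [A0 | [a0 a0A]]; last by exists a0.
have [c hc] := hsp (fun _ => 1); move: (hc 0); rewrite A0 big_set0 => /eqP.
by rewrite oner_eq0.
Qed.

Lemma S_of_ONB A B : ONB_orth A B -> ONB_span A B ->
  forall b b', b \in B -> b' \in B -> S b b' = (b == b')%:R.
Proof.
move=> hO hsp; have [a0 a0A] := Aneq0 _ _ hsp.
move=> b b' bB b'B; have := hO a0 b a0 b' a0A bB a0A b'B.
rewrite gabor_same xpair_eqE eqxx /=.
case: eqP => [<- | nb]; first by rewrite chi_conj mul1r.
move/eqP; rewrite mulf_eq0 mulf_eq0 conjC_eq0 !(negbTE (chi_neq0 _)) /= => /eqP //.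
Qed.


Lemma forward (A B : {set Vp p d}) (hEB : #|E| = #|B|) : ONB_orth A B -> ONB_span A B ->
  [/\ (forall x, `|g x| = (if x \in E then (sqrtC (#|E|%:R))^-1 else 0)),
      spectral_pair E B & tiling_pair E A].
Proof.
move=> hO hsp; have hS := S_of_ONB _ _ hO hsp.
have gg := gg_val _ hEB hS.
have gg' : forall y, g y * (g y)^* = if y \in E then (#|B|%:R)^-1 else 0.
  move=> y; case: ifP => [/gg //|/negbT /notsupp ->]; by rewrite mul0r.
split.
- move=> x; case: ifP => [xE|/negbT /notsupp ->]; last by rewrite normr0.
  apply/eqP; rewrite -(eqrXn2 (n:=2)) // ?invr_ge0 ?sqrtC_ge0 ?ler0n //.
  by rewrite normCK gg // exprVn sqrtCK hEB.
- have Bpos : forall b, b \in B -> (#|B|%:R : algC) != 0.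
    move=> b bB; rewrite pnatr_eq0 -lt0n; apply/card_gt0P; by exists b.
  split.
  + move=> b bB; rewrite (eq_bigr (fun _ => 1)) => [|x _]; last by rewrite chi_conj.
    by rewrite sumr_const hEB -mulr_natl mulr1 (Bpos b bB).
  split.
  + move=> b b' bB b'B nb; have := hS b b' bB b'B; rewrite (negbTE nb) /S.
    under eq_bigr => y _ do rewrite gg' ifmul.
    rewrite -big_mkcond /= -mulr_sumr => /eqP; rewrite mulf_eq0 invr_eq0 (negbTE (Bpos b bB)) /=.
    by move/eqP.
  + exact: spec_span.
- move=> x.
  have [c hc] := hsp (fun y => (y == x)%:R).
  have hcoef : forall a0 b0, a0 \in A -> b0 \in B -> c a0 b0 = (gabor g a0 b0 x)^*.
    move=> a0 b0 a0A b0B.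
    have e1 : inner (fun y => (y == x)%:R) (gabor g a0 b0) = (gabor g a0 b0 x)^*.
      rewrite /inner (bigD1 x) //= eqxx mul1r big1 ?addr0 // => y /negbTE ->.
      by rewrite mul0r.
    rewrite -e1 /inner; symmetry.
    have hc' : forall y, (y == x)%:R = \sum_(a in A) \sum_(b in B) c a b * gabor g a b y := hc.
    under eq_bigr => y _ do rewrite hc' big_distrl.
    rewrite exchange_big /=.
    transitivity (\sum_(a in A) \sum_(b in B) c a b * ((a, b) == (a0, b0))%:R).
      apply: eq_bigr => a aA; under eq_bigr => y _ do rewrite big_distrl.
      rewrite exchange_big /=; apply: eq_bigr => b bB; rewrite -hO // /inner mulr_sumr.
      by apply: eq_bigr => y _; rewrite mulrA.
    rewrite (bigD1 a0) //= (bigD1 b0) //= eqxx mulr1 big1 ?addr0; last first.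
      by move=> b /andP[_ /negbTE nb]; rewrite xpair_eqE nb andbF mulr0.
    rewrite big1 ?addr0 // => a /andP[_ /negbTE na]; rewrite big1 // => b _.
    by rewrite xpair_eqE na mulr0.
  have H1 : (1 : algC) = \sum_(a in A) (if x - a \in E then (#|B|%:R)^-1 else 0) *+ #|B|.
    transitivity ((x == x)%:R : algC); first by rewrite eqxx.
    rewrite hc; apply: eq_bigr => a aA; rewrite -sumr_const; apply: eq_bigr => b bB.
    by rewrite hcoef // /gabor rmorphM /= mulrACA [_^* * chi _]mulrC chi_conj mulr1 mulrC gg'.
  case: (posnP #|B|) => [B0|Bpos].
    by move: H1; rewrite big1 => [/eqP|a _]; rewrite ?oner_eq0 // B0 mulr0n.
  have H2 : forall a, (if x - a \in E then (#|B|%:R)^-1 else 0) *+ #|B| = (nat_of_bool (x - a \in E))%:R :> algC.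
    move=> a; case: ifP => _; last by rewrite mul0rn.
    by rewrite /= -[_ *+ #|B|]mulr_natr mulVf // pnatr_eq0 -lt0n.
  move: H1; rewrite (eq_bigr _ (fun a _ => H2 a)).
  rewrite -natr_sum => H; apply/eqP; rewrite -(eqr_nat algC) -H; done.
Qed.


Lemma tiling_unique (A : {set Vp p d}) : tiling_pair E A ->
  forall x a a', a \in A -> a' \in A -> x - a \in E -> x - a' \in E -> a = a'.
Proof.
move=> ht x a a' aA a'A ha ha'; apply/eqP/negPn/negP => na.
move: (ht x); rewrite (bigD1 a) //= (bigD1 a') /=; last by rewrite a'A eq_sym na.
by rewrite ha ha' addnA.
Qed.

Lemma backward (A B : {set Vp p d}) (hgg : inner g g = 1)
  (hi : forall x, `|g x| = (if x \in E then (sqrtC (#|E|%:R))^-1 else 0))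
  (hs : spectral_pair E B) (ht : tiling_pair E A) : ONB_orth A B /\ ONB_span A B.
Proof.
case: hs => [hs1 [hs2 hs3]].
have gg' : forall y, g y * (g y)^* = if y \in E then (#|E|%:R)^-1 else 0.
  move=> y; rewrite -normCK hi; case: ifP => _; last by rewrite expr0n.
  by rewrite exprVn sqrtCK.
split.
- move=> a b a' b' aA bB a'A b'B.
  case: (eqVneq a a') => [<- | na].
    rewrite gabor_same xpair_eqE eqxx /=.
    case: (eqVneq b b') => [<- | nb]; first by rewrite chi_conj mul1r Sbb hgg.
    rewrite /S; under eq_bigr => y _ do rewrite gg' ifmul.
    by rewrite -big_mkcond /= -mulr_sumr hs2 // !mulr0.
  rewrite xpair_eqE (negbTE na) /= /inner big1 // => y _.
  rewrite /gabor rmorphM /= mulrACA.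
  case: (boolP (y - a \in E)) => ya; last by rewrite (notsupp _ ya) !mul0r.
  case: (boolP (y - a' \in E)) => ya'; last by rewrite (notsupp _ ya') conjC0 mulr0 mul0r.
  by case/eqP: na; apply: (tiling_unique _ ht y a a' aA a'A ya ya').
- move=> f.
  pose h a y := f (y + a) / g y.
  pose C a := proj1_sig (constructive_indefinite_description _ (hs3 (h a))).
  have hC : forall a y, y \in E -> h a y = \sum_(b in B) C a b * chi (dotp y b).
    by move=> a; exact: (proj2_sig (constructive_indefinite_description _ (hs3 (h a)))).
  exists (fun a b => C a b * chi (- dotp a b)) => x.
  have [a1 a1A xa1] : exists2 a1, a1 \in A & x - a1 \in E.
    case: (pickP [pred a | (a \in A) && (x - a \in E)]) => [a1 /andP[? ?]|H].
      by exists a1.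
    move: (ht x); rewrite big1 // => a aA; have := H a; rewrite /= aA /= => ->.
    by [].
  rewrite (bigD1 a1) //= [X in _ + X]big1 ?addr0; last first.
    move=> a /andP[aA na]; apply: big1 => b _.
    case: (boolP (x - a \in E)) => xa; last by rewrite /gabor (notsupp _ xa) !mul0r mulr0.
    by case/eqP: na; apply: (tiling_unique _ ht x a a1 aA a1A xa xa1).
  have gnz : g (x - a1) != 0 by move: xa1; rewrite inE.
  transitivity (g (x - a1) * h a1 (x - a1)).
    by rewrite /h subrK mulrC divfK.
  rewrite hC // mulr_sumr; apply: eq_bigr => b _.
  rewrite /gabor dotpB chiB; ring.
Qed.

End Main.

Theorem theorem1p3 (p d : nat) (hp : prime p) (hd : (1 <= d)%N)
  (g : Vp p d -> algC) (A B : {set Vp p d})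
  (hg : l2norm g = 1) (hEB : #|supp g| = #|B|) :
  gabor_ONB g A B <->
  [/\ (forall x, `|g x| = (if x \in supp g then (sqrtC (#|supp g|%:R))^-1 else 0)),
      spectral_pair (supp g) B
    & tiling_pair (supp g) A].
Proof.
have hgg : inner g g = 1.
  by move: hg; rewrite /l2norm => H; rewrite -(sqrtCK (inner g g)) H expr1n.
split.
- by case=> hO hsp; exact: (@forward p d hp g A B hEB hO hsp).
- by case=> hi hs ht; exact: (@backward p d hp g A B hgg hi hs ht).
Qed.
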